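(* Let $V,H,K$ be complex Hilbert spaces such that $V$ is embedded in $H$ with compact inclusion map $i\colon V\to H$, and let $j\colon V\to K$ be a compact linear map. Let $\mathfrak a\colon V\times V\to\mathbb C$ be a positive, symmetric, continuous, $i$-elliptic sesquilinear form, and put $V_D=\ker j$. Let $A^N$ be the self-adjoint operator in $\overline V$ (closure in $H$) associated with $\mathfrak a$, and $A^D$ the self-adjoint operator in $\overline{V_D}$ (closure in $H$) associated with $\mathfrak a|_{V_D\times V_D}$. For $\lambda\in\mathbb R$ let $\mathfrak b_\lambda(u,v)=\mathfrak a(u,v)-\lambda (u,v)_H$ and let $\mathcal N_\lambda$ be the graph associated with $(\mathfrak b_\lambda,j)$. Suppose (I) $A^N$ has no eigenvector belonging to $V_D$, and (II) for every $\lambda\in(0,\infty)$, $\dim\operatorname{span}\{\varphi\in D(\mathcal N_\lambda): (\mathcal N_\lambda^\circ\varphi,\varphi)_K=0\}=\infty$. Let $\lambda_1^N\le\lambda_2^N\le\dots$ and $\lambda_1^D\le\lambda_2^D\le\dots$ be the eigenvalues of $A^N$ and $A^D$, repeated with multiplicity. Then $\lambda^N_{n+1}<\lambda^D_n$ for all $n\in\mathbb N$.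
   Context: A sesquilinear form $\mathfrak a$ on $V$ is positive if $\mathfrak a(u,u)\ge 0$ for all $u$, symmetric if $\mathfrak a(v,u)=\overline{\mathfrak a(u,v)}$, continuous if $|\mathfrak a(u,v)|\le M\|u\|_V\|v\|_V$ for some $M$, and $i$-elliptic if there are $\omega,\delta>0$ with $\mathfrak a(u,u)+\omega\|i(u)\|_H^2\ge\delta\|u\|_V^2$ for all $u\in V$. For a closed subspace $W\subset V$ and a continuous symmetric $i$-elliptic form $\mathfrak c$ on $W$, the self-adjoint operator in $\overline W$ (closure in $H$) associated with $\mathfrak c$ is defined by: $u\in D(B)$ and $Bu=f$ iff $u\in W$, $f\in\overline W$ and $\mathfrak c(u,v)=(f,v)_H$ for all $v\in W$; it is self-adjoint, bounded below, with compact resolvent (since $i$ is compact). The graph associated with $(\mathfrak b_\lambda,j)$ is $\mathcal N_\lambda=\{(j(u),\psi)\in K\times K: u\in V,\ \mathfrak b_\lambda(u,v)=(\psi,j(v))_K \text{ for all } v\in V\}$; it is a self-adjoint graph (linear relation) in $K$, bounded below, with compact resolvent. Its domain is $D(\mathcal N_\lambda)=\{\varphi: \exists\psi,\ (\varphi,\psi)\in\mathcal N_\lambda\}$, and its single-valued part $\mathcal N_\lambda^\circ$ is the self-adjoint operator in the Hilbert space $\overline{D(\mathcal N_\lambda)}$ (closure in $K$) whose graph is $\mathcal N_\lambda\cap(\overline{D(\mathcal N_\lambda)}\times\overline{D(\mathcal N_\lambda)})$; $D(\mathcal N_\lambda^\circ)=D(\mathcal N_\lambda)$. *)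

(* Defs.v *)
From HB Require Import structures.
From mathcomp Require Import all_boot all_order all_algebra.
From mathcomp Require Import reals.
From mathcomp.real_closed Require Import complex.
Set Implicit Arguments. Unset Strict Implicit. Unset Printing Implicit Defensive.
Import Order.TTheory GRing.Theory Num.Theory.
Local Open Scope ring_scope.

Section Hilbert.
Variable R : realType.
Local Notation C := (R[i]).

Definition cR (x : R) : C := Complex x 0.
Definition cconj (z : C) : C := conjc z.

Section Space.
Variable (V : lmodType C) (ip : V -> V -> C).

Definition is_inner_product : Prop :=
  [/\ forall (c : C) (x y z : V), ip (c *: x + y) z = c * ip x z + ip y z,
      forall x y : V, ip y x = cconj (ip x y),
      forall x : V, 0 <= ip x x
    & forall x : V, ip x x = 0 -> x = 0].

Definition hnorm (x : V) : R := Num.sqrt (complex.Re (ip x x)).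

Definition hconverges (u : nat -> V) (l : V) : Prop :=
  forall e : R, 0 < e -> exists N, forall n, (N <= n)%N -> hnorm (u n - l) < e.

Definition hcauchy (u : nat -> V) : Prop :=
  forall e : R, 0 < e -> exists N, forall n m, (N <= n)%N -> (N <= m)%N ->
    hnorm (u n - u m) < e.

Definition hbounded (u : nat -> V) : Prop :=
  exists M : R, forall n, hnorm (u n) <= M.

Definition is_hilbert : Prop :=
  is_inner_product /\ forall u, hcauchy u -> exists l, hconverges u l.

Definition hclosure (S : V -> Prop) (x : V) : Prop :=
  exists u : nat -> V, (forall n, S (u n)) /\ hconverges u x.

Definition lin_indep (n : nat) (x : 'I_n -> V) : Prop :=
  forall c : 'I_n -> C, \sum_(k < n) c k *: x k = 0 -> forall k, c k = 0.

Definition hspan (S : V -> Prop) (x : V) : Prop :=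
  exists n (c : 'I_n -> C) (y : 'I_n -> V),
    (forall k, S (y k)) /\ x = \sum_(k < n) c k *: y k.

Definition infinite_dim (S : V -> Prop) : Prop :=
  forall n, exists x : 'I_n -> V, lin_indep x /\ forall k, S (x k).

End Space.

Definition compact_map (V W : lmodType C) (ipV : V -> V -> C) (ipW : W -> W -> C)
  (f : V -> W) : Prop :=
  forall u : nat -> V, hbounded ipV u ->
    exists (phi : nat -> nat) (l : W), (forall n, (phi n < phi n.+1)%N) /\
      hconverges ipW (fun n => f (u (phi n))) l.

Section Forms.
Variables (V H : lmodType C) (ipV : V -> V -> C) (ipH : H -> H -> C) (i : V -> H).

Definition sesquilinear (a : V -> V -> C) : Prop :=
  (forall (c : C) u w v, a (c *: u + w) v = c * a u v + a w v) /\
  (forall (c : C) u v w, a u (c *: v + w) = cconj c * a u v + a u w).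

Definition form_positive (a : V -> V -> C) : Prop := forall u, 0 <= a u u.
Definition form_symmetric (a : V -> V -> C) : Prop :=
  forall u v, a v u = cconj (a u v).
Definition form_continuous (a : V -> V -> C) : Prop :=
  exists M : R, forall u v, Normc.normc (a u v) <= M * hnorm ipV u * hnorm ipV v.
Definition form_elliptic (a : V -> V -> C) : Prop :=
  exists omega delta : R, 0 < omega /\ 0 < delta /\
    forall u, cR (delta * hnorm ipV u ^+ 2) <= a u u + cR (omega * hnorm ipH (i u) ^+ 2).

(* The operator in the closure (in H) of i(W) associated with the form c on the
   subspace W of V (V identified with its image i(V) in H), as a relation:
   assoc_op W c g f  <->  g \in D(B) and B g = f. *)
Definition assoc_op (W : V -> Prop) (c : V -> V -> C) (g f : H) : Prop :=
  exists u, [/\ W u, g = i u,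
               hclosure ipH (fun h => exists w, W w /\ h = i w) f
             & forall v, W v -> c u v = ipH f (i v)].

(* eig_le B n mu : B has at least n linearly independent eigenvectors with
   (real) eigenvalues <= mu, i.e. lambda_n <= mu (eigenvalues repeated with
   multiplicity, 1-indexed) *)
Definition eig_le (B : H -> H -> Prop) (n : nat) (mu : R) : Prop :=
  exists x : 'I_n -> H, lin_indep x /\
    forall k, exists nu : R, nu <= mu /\ B (x k) (cR nu *: x k).

(* nth_eig B n mu : mu is the n-th eigenvalue (1-indexed, counted with
   multiplicity, in nondecreasing order) of B *)
Definition nth_eig (B : H -> H -> Prop) (n : nat) (mu : R) : Prop :=
  eig_le B n mu /\ forall mu', mu' < mu -> ~ eig_le B n mu'.
End Forms.

Section DtN.
Variables (V H K : lmodType C) (ipH : H -> H -> C) (ipK : K -> K -> C)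
  (i : V -> H) (j : V -> K) (a : V -> V -> C).

Definition bform (lam : R) (u v : V) : C := a u v - cR lam * ipH (i u) (i v).

Definition Ngraph (lam : R) (phi psi : K) : Prop :=
  exists u, phi = j u /\ forall v, bform lam u v = ipK psi (j v).

Definition Ndom (lam : R) (phi : K) : Prop := exists psi, Ngraph lam phi psi.

(* single-valued part: phi |-> the psi in the closure of D(N) with (phi,psi) in N *)
Definition Nop (lam : R) (phi psi : K) : Prop :=
  Ngraph lam phi psi /\ hclosure ipK (Ndom lam) psi.

Definition Nzero (lam : R) (phi : K) : Prop :=
  Ndom lam phi /\ exists psi, Nop lam phi psi /\ ipK psi phi = 0.
End DtN.
End Hilbert.

(* Main.v *)
Require Import Defs.
From HB Require Import structures.
From mathcomp Require Import all_boot all_order all_algebra.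
From mathcomp Require Import reals.
From mathcomp.real_closed Require Import complex.
Import Order.TTheory GRing.Theory Num.Theory.
Local Open Scope ring_scope.
From mathcomp Require Import boolp classical_sets.
From mathcomp Require Import ring lra.
Import Order.TTheory GRing.Theory Num.Theory.
Local Open Scope ring_scope.
Set Implicit Arguments. Unset Strict Implicit.

Section CX.
Variable R : realType.
Local Notation C := (R[i]).
Local Notation Rp := (@complex.Re R).
Local Notation Ip := (@complex.Im R).
Implicit Types x y z : C.
Lemma cReM x y : Rp (x * y) = Rp x * Rp y - Ip x * Ip y.
Proof. by case: x => a b; case: y => c d. Qed.
Lemma cImM x y : Ip (x * y) = Rp x * Ip y + Ip x * Rp y.
Proof. by case: x => a b; case: y => c d /=; rewrite addrC. Qed.
Lemma cReD x y : Rp (x + y) = Rp x + Rp y.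
Proof. by case: x => a b; case: y => c d. Qed.
Lemma cImD x y : Ip (x + y) = Ip x + Ip y.
Proof. by case: x => a b; case: y => c d. Qed.
Lemma cReN x : Rp (- x) = - Rp x. Proof. by case: x. Qed.
Lemma cImN x : Ip (- x) = - Ip x. Proof. by case: x. Qed.
Lemma cReB x y : Rp (x - y) = Rp x - Rp y. Proof. by rewrite cReD cReN. Qed.
Lemma cImB x y : Ip (x - y) = Ip x - Ip y. Proof. by rewrite cImD cImN. Qed.
Lemma cReJ x : Rp (cconj x) = Rp x. Proof. by case: x. Qed.
Lemma cImJ x : Ip (cconj x) = - Ip x. Proof. by case: x. Qed.
Lemma RecR (t : R) : Rp (cR t) = t. Proof. by []. Qed.
Lemma ImcR (t : R) : Ip (cR t) = 0. Proof. by []. Qed.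
Lemma cRe0 : Rp 0 = 0. Proof. by []. Qed.
Lemma cIm0 : Ip 0 = 0. Proof. by []. Qed.
Lemma cRe1 : Rp 1 = 0 + 1. Proof. by rewrite add0r. Qed.
Lemma cplx_ext x y : Rp x = Rp y -> Ip x = Ip y -> x = y.
Proof. by case: x => a b; case: y => c d /= -> ->. Qed.
Lemma ReMcR (t : R) x : Rp (cR t * x) = t * Rp x.
Proof. by rewrite cReM RecR ImcR mul0r subr0. Qed.
Lemma ImMcR (t : R) x : Ip (cR t * x) = t * Ip x.
Proof. by rewrite cImM RecR ImcR mul0r addr0. Qed.
Lemma cconjK x : cconj (cconj x) = x.
Proof. by apply: cplx_ext; rewrite ?cReJ ?cImJ ?opprK. Qed.
Lemma cconjM x y : cconj (x * y) = cconj x * cconj y.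
Proof. apply: cplx_ext; rewrite ?cReJ ?cImJ ?cReM ?cImM ?cReJ ?cImJ; ring. Qed.
Lemma cconjD x y : cconj (x + y) = cconj x + cconj y.
Proof. apply: cplx_ext; rewrite ?cReJ ?cImJ ?cReD ?cImD ?cReJ ?cImJ; ring. Qed.
Lemma cconjN x : cconj (- x) = - cconj x.
Proof. apply: cplx_ext; rewrite ?cReJ ?cImJ ?cReN ?cImN ?cReJ ?cImJ //. Qed.
Lemma cconj0 : cconj (0:C) = 0. Proof. by apply: cplx_ext; rewrite ?cReJ ?cImJ ?oppr0. Qed.
Lemma cconj1 : cconj (1:C) = 1. Proof. by apply: cplx_ext; rewrite ?cReJ ?cImJ ?oppr0. Qed.
Lemma cconjR (t : R) : cconj (cR t) = cR t.
Proof. by apply: cplx_ext; rewrite ?cReJ ?cImJ ?ImcR ?oppr0. Qed.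
Lemma cconj_eq0 x : cconj x = 0 -> x = 0.
Proof. by move=> h; rewrite -[x]cconjK h cconj0. Qed.
Lemma cRD (s t : R) : cR (s + t) = cR s + cR t.
Proof. by apply: cplx_ext; rewrite ?cReD ?cImD /= ?addr0. Qed.
Lemma cRM (s t : R) : cR (s * t) = cR s * cR t.
Proof. by apply: cplx_ext; rewrite ?cReM ?cImM /= ?mulr0 ?mul0r ?subr0 ?addr0. Qed.
Lemma cRN (t : R) : cR (- t) = - cR t.
Proof. by apply: cplx_ext; rewrite ?cReN ?cImN /= ?oppr0. Qed.
Lemma cR0 : cR (0:R) = 0. Proof. by []. Qed.
Lemma cR1 : cR (1:R) = 1. Proof. by []. Qed.
Lemma cR_inj (s t : R) : cR s = cR t -> s = t. Proof. by case. Qed.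
Lemma cRV (t : R) : t != 0 -> cR t^-1 = (cR t)^-1.
Proof.
move=> t0; have c0 : cR t != 0 by apply/eqP => /cR_inj /eqP; rewrite (negPf t0).
by apply: (mulfI c0); rewrite -cRM mulfV // mulfV.
Qed.
Lemma mulJ x : x * cconj x = cR (Rp x ^+ 2 + Ip x ^+ 2).
Proof. apply: cplx_ext; rewrite ?cReM ?cImM ?cReJ ?cImJ /=; ring. Qed.
Lemma le0c x : (0 <= x) = (Ip x == 0) && (0 <= Rp x).
Proof. by rewrite lecE. Qed.
Lemma le0c_real x : 0 <= x -> x = cR (Rp x).
Proof. by rewrite le0c => /andP [/eqP h _]; apply: cplx_ext. Qed.
Lemma lec_Re x y : x <= y -> Rp x <= Rp y.
Proof. by rewrite lecE => /andP []. Qed.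
Lemma normc_ge_Re x : Rp x <= Normc.normc x.
Proof.
case: x => a b /=. case: (lerP a 0) => ha; first by apply: le_trans ha _; exact: sqrtr_ge0.
rewrite -(@ler_pXn2r _ 2) //; last by rewrite qualifE /= sqrtr_ge0.
  by rewrite sqr_sqrtr ?addr_ge0 ?sqr_ge0 // lerDl sqr_ge0.
by rewrite qualifE /= ltW.
Qed.
Lemma normc_ge_Im x : Ip x <= Normc.normc x.
Proof.
case: x => a b /=. case: (lerP b 0) => ha; first by apply: le_trans ha _; exact: sqrtr_ge0.
rewrite -(@ler_pXn2r _ 2) //; last by rewrite qualifE /= sqrtr_ge0.
  by rewrite sqr_sqrtr ?addr_ge0 ?sqr_ge0 // lerDr sqr_ge0.
by rewrite qualifE /= ltW.
Qed.
Lemma normcN' x : Normc.normc (- x) = Normc.normc x.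
Proof. by case: x => a b /=; rewrite !sqrrN. Qed.
End CX.


Set Default Proof Using "All".
Section Form.
Variable R : realType.
Local Notation C := (R[i]).
Local Notation Rp := (@complex.Re R).
Local Notation Ip := (@complex.Im R).
Variables (V : lmodType C) (s : V -> V -> C).
Hypothesis sL : forall (c : C) (x y z : V), s (c *: x + y) z = c * s x z + s y z.
Hypothesis sH : forall x y : V, s y x = cconj (s x y).

Definition Qf x := Rp (s x x).

Lemma sR (c : C) x y z : s z (c *: x + y) = cconj c * s z x + s z y.
Proof. by rewrite sH sL cconjD cconjM -!sH. Qed.
Lemma s0l y : s 0 y = 0.
Proof. have := sL 1 0 0 y; rewrite scaler0 addr0 mul1r => h.
have : s 0 y + s 0 y - s 0 y = s 0 y - s 0 y by rewrite -h.
by rewrite addrK subrr. Qed.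
Lemma s0r y : s y 0 = 0. Proof. rewrite sH s0l; exact: cconj0. Qed.
Lemma sDl x y z : s (x + y) z = s x z + s y z.
Proof. by have := sL 1 x y z; rewrite scale1r mul1r. Qed.
Lemma sDr x y z : s z (x + y) = s z x + s z y.
Proof. by have := sR 1 x y z; rewrite scale1r cconj1 mul1r. Qed.
Lemma sZl c x z : s (c *: x) z = c * s x z.
Proof. by rewrite -[c *: x]addr0 sL s0l addr0. Qed.
Lemma sZr c x z : s z (c *: x) = cconj c * s z x.
Proof. by rewrite -[c *: x]addr0 sR s0r addr0. Qed.
Lemma sNl x z : s (- x) z = - s x z.
Proof. by rewrite -scaleN1r sZl mulN1r. Qed.
Lemma sNr x z : s z (- x) = - s z x.
Proof. by rewrite -scaleN1r sZr cconjN cconj1 mulN1r. Qed.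
Lemma sBl x y z : s (x - y) z = s x z - s y z.
Proof. by rewrite sDl sNl. Qed.
Lemma sBr x y z : s z (x - y) = s z x - s z y.
Proof. by rewrite sDr sNr. Qed.
Lemma s_suml n (c : 'I_n -> C) (x : 'I_n -> V) y :
  s (\sum_(k < n) c k *: x k) y = \sum_(k < n) c k * s (x k) y.
Proof.
elim/big_rec2 : _ => [|k a b _ IH]; first by rewrite s0l.
by rewrite sL IH.
Qed.
Lemma s_sumr n (c : 'I_n -> C) (x : 'I_n -> V) y :
  s y (\sum_(k < n) c k *: x k) = \sum_(k < n) cconj (c k) * s y (x k).
Proof.
elim/big_rec2 : _ => [|k a b _ IH]; first by rewrite s0r.
by rewrite sR IH.
Qed.
Lemma s_real x : Ip (s x x) = 0.
Proof. have := congr1 Ip (sH x x); rewrite cImJ => /eqP; rewrite -subr_eq0 opprK -mulr2n.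
by rewrite mulrn_eq0 /= => /eqP. Qed.
Lemma s_cR x : s x x = cR (Qf x).
Proof. by apply: cplx_ext; rewrite ?s_real. Qed.
Lemma ReH x y : Rp (s y x) = Rp (s x y).
Proof. by rewrite sH cReJ. Qed.
Lemma Qf_add x y : Qf (x + y) = Qf x + Qf y + 2 * Rp (s x y).
Proof. rewrite /Qf sDl !sDr !cReD (ReH y x); ring. Qed.
Lemma Qf_sub x y : Qf (x - y) = Qf x + Qf y - 2 * Rp (s x y).
Proof. rewrite /Qf sBl !sBr !cReB (ReH y x); ring. Qed.
Lemma Qf_scale (t : R) x : Qf (cR t *: x) = t ^+ 2 * Qf x.
Proof. by rewrite /Qf sZl sZr cconjR mulrA -cRM ReMcR expr2. Qed.
Lemma Qf_scaleC (c : C) x : Qf (c *: x) = (Rp c ^+ 2 + Ip c ^+ 2) * Qf x.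
Proof. by rewrite /Qf sZl sZr mulrA mulJ ReMcR. Qed.
Lemma Qf_neg x : Qf (- x) = Qf x.
Proof. by rewrite /Qf sNl sNr opprK. Qed.
Lemma Qf0 : Qf 0 = 0. Proof. by rewrite /Qf s0l. Qed.
Lemma Qf_par x y : Qf (x + y) + Qf (x - y) = 2 * Qf x + 2 * Qf y.
Proof. rewrite Qf_add Qf_sub; ring. Qed.
Lemma cross (t : R) x y : 0 < t -> 0 <= Qf (cR t *: x - y) ->
  2 * Rp (s x y) <= t * Qf x + Qf y / t.
Proof.
move=> t0; rewrite Qf_sub Qf_scale sZl ReMcR => h.
have ht : t != 0 by rewrite gt_eqF.
have e : Qf y = t * (Qf y / t) by rewrite mulrC divfK.
move: h; rewrite e; set u := Qf y / t => h.
rewrite -(@ler_pM2l _ t) // (mulrC t u) mulfK //. nra.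
Qed.
End Form.

Section Norm.
Variable R : realType.
Local Notation C := (R[i]).
Variables (V : lmodType C) (s : V -> V -> C).
Hypothesis sL : forall (c : C) (x y z : V), s (c *: x + y) z = c * s x z + s y z.
Hypothesis sH : forall x y : V, s y x = cconj (s x y).
Lemma Qf_scaleV (q : R) x : 0 < q ->
  Qf s (cR (Num.sqrt q)^-1 *: x) = Qf s x / q.
Proof.
move=> q0; rewrite Qf_scale // exprVn sqr_sqrtr ?ltW // mulrC //.
Qed.
End Norm.


Lemma exists_nat (R : realType) (x : R) : exists N : nat, x < N%:R.
Proof. by exists (Num.truncn x).+1; exact: truncnS_gt. Qed.

Set Default Proof Using "All".
Section IP.
Variable R : realType.
Local Notation C := (R[i]).
Local Notation Rp := (@complex.Re R).
Local Notation Ip := (@complex.Im R).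
Variables (V : lmodType C) (ip : V -> V -> C).
Hypothesis hip : is_inner_product ip.

Lemma ipL : forall (c : C) (x y z : V), ip (c *: x + y) z = c * ip x z + ip y z.
Proof. by case: hip. Qed.
Lemma ipH' : forall x y : V, ip y x = cconj (ip x y).
Proof. by case: hip. Qed.
Lemma ipQ_ge0 x : 0 <= Qf ip x.
Proof. by case: hip => _ _ h _; apply: (lec_Re (h x)). Qed.
Lemma ipQ_eq0 x : Qf ip x = 0 -> x = 0.
Proof. case: hip => _ _ hp hd q0; apply: hd; rewrite (s_cR ipL ipH' x) q0 //. Qed.
Lemma hnormE x : hnorm ip x = Num.sqrt (Qf ip x). Proof. by []. Qed.
Lemma hnorm_sq x : hnorm ip x ^+ 2 = Qf ip x.
Proof. by rewrite hnormE sqr_sqrtr // ipQ_ge0. Qed.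
Lemma hnorm_lt x r : 0 < r -> hnorm ip x < r -> Qf ip x < r ^+ 2.
Proof.
move=> r0 h; rewrite -hnorm_sq.
have hn0 : 0 <= hnorm ip x by rewrite hnormE sqrtr_ge0.
nra.
Qed.
Lemma Q_lt_hnorm x r : 0 < r -> Qf ip x < r ^+ 2 -> hnorm ip x < r.
Proof.
move=> r0; rewrite -hnorm_sq => h.
have hn0 : 0 <= hnorm ip x by rewrite hnormE sqrtr_ge0.
nra.
Qed.
Lemma Q_tri x y : Qf ip (x + y) <= 2 * Qf ip x + 2 * Qf ip y.
Proof. have := Qf_par ipL ipH' x y; have := ipQ_ge0 (x - y); lra. Qed.
Lemma Q_tri' x y : Qf ip (x - y) <= 2 * Qf ip x + 2 * Qf ip y.
Proof. by have := Q_tri x (- y); rewrite Qf_neg //; [apply: ipL|apply: ipH']. Qed.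
End IP.

Section Small.
Variable R : realType.
Local Notation C := (R[i]).
Local Notation Rp := (@complex.Re R).
Local Notation Ip := (@complex.Im R).
Lemma small_le (x : R) : (forall e, 0 < e -> x <= e) -> x <= 0.
Proof.
move=> h; rewrite leNgt; apply/negP => x0.
have := h (x / 2%:R); rewrite divr_gt0 // => /(_ isT). lra.
Qed.
Lemma small_abs (x : R) : (forall e, 0 < e -> `|x| <= e) -> x = 0.
Proof.
move=> h; apply/eqP; rewrite -normr_le0; apply: small_le => e e0; exact: h.
Qed.
Lemma small_c (z : C) : (forall e, 0 < e -> `|Rp z| <= e /\ `|Ip z| <= e) -> z = 0.
Proof.
move=> h; apply: cplx_ext; rewrite ?cRe0 ?cIm0; apply: small_abs => e e0; by case: (h e e0).
Qed.
End Small.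

Section Cont.
Variable R : realType.
Local Notation C := (R[i]).
Local Notation Rp := (@complex.Re R).
Local Notation Ip := (@complex.Im R).
Variables (V : lmodType C) (ip : V -> V -> C).
Hypothesis hip : is_inner_product ip.
Variable (s : V -> V -> C).
Hypothesis sL : forall (c : C) (x y z : V), s (c *: x + y) z = c * s x z + s y z.
Hypothesis sH : forall x y : V, s y x = cconj (s x y).
Hypothesis spos : forall x, 0 <= Qf s x.
Variable Cs : R.
Hypothesis Cs0 : 0 < Cs.
Hypothesis sb : forall d, Qf s d <= Cs * Qf ip d.

Lemma cont1 g e : 0 < e -> exists2 eta, 0 < eta &
  forall d, Qf ip d < eta -> Rp (s g d) <= e.
Proof.
move=> e0; have q0 := spos g.
pose t := e / (Qf s g + 1).
have t0 : 0 < t by rewrite divr_gt0 // ltr_pwDr.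
exists (e * t / Cs); first by rewrite !divr_gt0 // mulr_gt0.
move=> d hd.
have hc := cross sL sH t0 (spos _ : 0 <= Qf s (cR t *: g - d)).
have h1 : t * Qf s g <= e.
  rewrite /t mulrAC ler_pdivrMr ?ltr_pwDr //; nra.
have h2 : Qf s d / t <= e.
  rewrite ler_pdivrMr //; apply: le_trans (sb d) _.
  move: hd; rewrite ltr_pdivlMr // => hd; nra.
lra.
Qed.

Lemma cont2 g e : 0 < e -> exists2 eta, 0 < eta &
  forall d, Qf ip d < eta -> `|Rp (s g d)| <= e /\ `|Ip (s g d)| <= e.
Proof.
move=> e0; case: (cont1 g e0) => eta eta0 h; exists eta => // d hd.
have hN : Qf ip (- d) < eta by rewrite Qf_neg //; [apply: ipL|apply: ipH'].
have hI : Qf ip ('i%C *: d) < eta.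
  rewrite (Qf_scaleC (ipL hip) (ipH' hip)) /= expr0n /= add0r expr1n mul1r //.
have hIN : Qf ip (- ('i%C *: d)) < eta by rewrite Qf_neg //; [apply: ipL|apply: ipH'].
have := h _ hd; have := h _ hN; have := h _ hI; have := h _ hIN.
rewrite !(sNr sL sH) !(sZr sL sH) !cReN !cReM /= !mul0r !mulN1r !sub0r !opprK.
move=> h1 h2 h3 h4; split; rewrite ler_norml; apply/andP; split; lra.
Qed.
End Cont.

Lemma hconv_Q (R : realType) (V : lmodType R[i]) (ip : V -> V -> R[i])
  (hip : is_inner_product ip) u l :
  hconverges ip u l -> forall eta, 0 < eta -> exists N, forall n, (N <= n)%N ->
  Qf ip (u n - l) < eta.
Proof.
move=> hc eta eta0; pose e := Num.min 1 eta.
have e0 : 0 < e by rewrite lt_min ltr01 eta0.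
have e1 : e <= 1 by rewrite ge_min lexx.
have e2 : e <= eta by rewrite ge_min lexx orbT.
case: (hc e e0) => N hN; exists N => n /hN /(hnorm_lt hip e0) h.
apply: lt_le_trans h _; nra.
Qed.

Lemma inv_nat_le (R : realType) (m n : nat) : (m <= n)%N ->
  (n.+1%:R : R)^-1 <= (m.+1%:R)^-1.
Proof. by move=> h; rewrite lef_pV2 ?posrE ?ltr0Sn // ler_nat. Qed.
Lemma inv_nat_small (R : realType) (e : R) : 0 < e ->
  exists N : nat, forall n, (N <= n)%N -> (n.+1%:R : R)^-1 < e.
Proof.
move=> e0; case: (exists_nat e^-1) => N hN; exists N => n hn.
apply: le_lt_trans (inv_nat_le _ hn) _.
rewrite -[X in _ < X]invrK ltf_pV2 ?posrE ?invr_gt0 ?ltr0Sn //.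
apply: lt_le_trans hN _; rewrite ler_nat; exact: leqnSn.
Qed.

Set Default Proof Using "All".

Lemma incr_le (phi : nat -> nat) : (forall n, (phi n < phi n.+1)%N) ->
  forall m n, (m <= n)%N -> (phi m <= phi n)%N.
Proof.
move=> hp m n /subnK <-; elim: (n - m)%N => [|k IH] //=.
by rewrite addSn; apply: leq_trans IH (ltnW (hp _)).
Qed.
Lemma incr_ge (phi : nat -> nat) : (forall n, (phi n < phi n.+1)%N) ->
  forall n, (n <= phi n)%N.
Proof. move=> hp; elim=> [|n IH] //; exact: leq_ltn_trans IH (hp n). Qed.

Section Main.
Variable R : realType.
Local Notation C := (R[i]).
Local Notation Rp := (@complex.Re R).
Local Notation Ip := (@complex.Im R).
Variables (V H K : lmodType C) (ipV : V -> V -> C) (ipH : H -> H -> C) (ipK : K -> K -> C).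
Hypotheses (hV : is_hilbert ipV) (hH : is_hilbert ipH) (hK : is_hilbert ipK).
Variable (i : {linear V -> H}).
Hypotheses (i_inj : injective i) (i_cpt : compact_map ipV ipH i).
Variable (j : {linear V -> K}).
Hypothesis (j_cpt : compact_map ipV ipK j).
Variable (a : V -> V -> C).
Hypotheses (a_sesq : sesquilinear a) (a_pos : form_positive a)
  (a_sym : form_symmetric a) (a_cont : form_continuous ipV a)
  (a_ell : form_elliptic ipV ipH i a).

Definition hh u v := ipH (i u) (i v).
Lemma hipV : is_inner_product ipV. Proof. by case: hV. Qed.
Lemma hipH : is_inner_product ipH. Proof. by case: hH. Qed.
Lemma hipK : is_inner_product ipK. Proof. by case: hK. Qed.
Lemma hhL (c : C) x y z : hh (c *: x + y) z = c * hh x z + hh y z.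
Proof. by rewrite /hh linearP (ipL hipH). Qed.
Lemma hhH x y : hh y x = cconj (hh x y).
Proof. by rewrite /hh (ipH' hipH). Qed.
Lemma aL (c : C) x y z : a (c *: x + y) z = c * a x z + a y z.
Proof. by case: a_sesq. Qed.
Lemma aH x y : a y x = cconj (a x y).
Proof. exact: a_sym. Qed.

Local Notation Nh := (Qf hh).
Local Notation Aq := (Qf a).
Local Notation QV := (Qf ipV).
Local Notation QH := (Qf ipH).

Lemma NhE u : Nh u = QH (i u). Proof. by []. Qed.
Lemma Nh_ge0 u : 0 <= Nh u. Proof. exact: (ipQ_ge0 hipH). Qed.
Lemma Nh_eq0 u : Nh u = 0 -> u = 0.
Proof. by move/(ipQ_eq0 hipH) => h; apply: i_inj; rewrite h linear0. Qed.
Lemma Aq_ge0 u : 0 <= Aq u. Proof. exact: lec_Re (a_pos u). Qed.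
Lemma QV_ge0 u : 0 <= QV u. Proof. exact: (ipQ_ge0 hipV). Qed.

Lemma ell : exists omega delta : R, [/\ 0 < omega, 0 < delta &
  forall u, delta * QV u <= Aq u + omega * Nh u].
Proof.
case: a_ell => om [de [om0 [de0 h]]]; exists om, de; split => // u.
by have := lec_Re (h u); rewrite cReD !RecR (hnorm_sq hipV) (hnorm_sq hipH).
Qed.

Lemma acont : exists M : R, forall u, Aq u <= M * QV u.
Proof.
case: a_cont => M h; exists M => u; apply: le_trans (normc_ge_Re _) _.
by apply: le_trans (h u u) _; rewrite -mulrA -expr2 (hnorm_sq hipV).
Qed.

Lemma ibound : exists Cb : R, 0 < Cb /\ forall u, Nh u <= Cb * QV u.
Proof.
case: (pselect (exists Cb : R, 0 < Cb /\ forall u, Nh u <= Cb * QV u)) => // H0.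
exfalso.
have hex : forall n : nat, exists u, n.+1%:R * QV u < Nh u.
  move=> n; case: (pselect (exists u, n.+1%:R * QV u < Nh u)) => // hn.
  exfalso; apply: H0; exists n.+1%:R; split => // u.
  by rewrite leNgt; apply/negP => hlt; apply: hn; exists u.
case: (choice hex) => u hu.
have q0 : forall n, 0 < QV (u n).
  move=> n; rewrite lt_neqAle QV_ge0 andbT; apply/eqP => q0.
  have := hu n; rewrite -q0 mulr0 => /[dup] h.
  by rewrite (ipQ_eq0 hipV (esym q0)) Qf0 ?ltxx //; [apply: hhL|apply: hhH].
pose w n := cR (Num.sqrt (QV (u n)))^-1 *: u n.
have Qw n : QV (w n) = 1.
  by rewrite /w (Qf_scaleV (ipL hipV) (ipH' hipV)) // divff // gt_eqF.
have Nw n : n.+1%:R < Nh (w n).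
  rewrite /w (Qf_scaleV hhL hhH) // ltr_pdivlMr //; exact: hu.
have hb : hbounded ipV w.
  by exists 1 => n; rewrite /hnorm -/(Qf ipV (w n)) Qw sqrtr1.
case: (i_cpt hb) => phi [l [hphi hcv]].
case: (hcv 1 ltr01) => N hN.
case: (exists_nat (2 + 2 * QH l)) => N2 hN2.
pose n := maxn N N2.
have hn : (N <= n)%N by rewrite leq_maxl.
have := hnorm_lt hipH ltr01 (hN n hn); rewrite expr1n => hQ.
have h1 : Nh (w (phi n)) <= 2 * QH (i (w (phi n)) - l) + 2 * QH l.
  rewrite NhE; have := Q_tri hipH (i (w (phi n)) - l) l; by rewrite subrK.
have h2 : (N2%:R : R) <= (phi n).+1%:R.
  rewrite ler_nat; apply: leq_trans (leqnSn _); apply: leq_trans (incr_ge hphi n).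
  exact: leq_maxr.
have := Nw (phi n); lra.
Qed.

Lemma Lcpt (w : nat -> V) (M : R) : (forall n, QV (w n) <= M) ->
  exists phi : nat -> nat, (forall n, (phi n < phi n.+1)%N) /\
  forall e, 0 < e -> exists N, forall n m, (N <= n)%N -> (N <= m)%N ->
    Nh (w (phi n) - w (phi m)) < e.
Proof.
move=> hM.
have hb : hbounded ipV w.
  exists (Num.sqrt M) => n; rewrite /hnorm -/(QV (w n)).
  by rewrite ler_sqrt // (le_trans (QV_ge0 _) (hM n)).
case: (i_cpt hb) => phi [l [hphi hcv]]; exists phi; split => // e e0.
have e40 : 0 < e / 4%:R by rewrite divr_gt0.
case: (hconv_Q hipH hcv e40) => N hN; exists N => n m hn hm.
rewrite NhE linearB.
have -> : i (w (phi n)) - i (w (phi m)) =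
  (i (w (phi n)) - l) - (i (w (phi m)) - l) by rewrite opprB addrA subrK.
apply: le_lt_trans (Q_tri' hipH _ _) _.
have := hN _ hn; have := hN _ hm; lra.
Qed.

Definition Wf (f : nat -> V) k v := forall l, (l < k)%N -> hh v (f l) = 0.
Lemma W_lin f k (c : C) x y : Wf f k x -> Wf f k y -> Wf f k (c *: x + y).
Proof. by move=> hx hy l hl; rewrite hhL hx // hy // mulr0 addr0. Qed.
Lemma W_scale f k (c : C) x : Wf f k x -> Wf f k (c *: x).
Proof. by move=> hx; rewrite -[c *: x]addr0; apply: W_lin => // l _; rewrite /hh linear0 (s0l (ipL hipH) (ipH' hipH)). Qed.
Lemma W_add f k x y : Wf f k x -> Wf f k y -> Wf f k (x + y).
Proof. by move=> hx hy; rewrite -[x]scale1r; apply: W_lin. Qed.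
Lemma W_neg f k x : Wf f k x -> Wf f k (- x).
Proof. by move=> hx; rewrite -scaleN1r; apply: W_scale. Qed.

Definition Mz f k v := [/\ Wf f k v, Nh v = 1 &
  forall w, Wf f k w -> Aq v * Nh w <= Aq w].

Lemma Nh_pos u : u <> 0 -> 0 < Nh u.
Proof. by move=> u0; rewrite lt_neqAle Nh_ge0 andbT; apply/eqP => /esym/Nh_eq0. Qed.

Lemma minimizer f k : (exists w, Wf f k w /\ w <> 0) -> exists v, Mz f k v.
Proof.
move=> [w0 [Ww0 w00]].
pose E : set R := fun r => exists v, [/\ Wf f k v, Nh v = 1 & r = Aq v].
have Nw0 := Nh_pos w00.
pose v0 := cR (Num.sqrt (Nh w0))^-1 *: w0.
have E0 : E (Aq v0).
  exists v0; split => //; first exact: W_scale.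
  by rewrite /v0 (Qf_scaleV hhL hhH) // divff // gt_eqF.
have Elb : lbound E 0 by move=> r [v [_ _ ->]]; exact: Aq_ge0.
have hinf : has_inf E by split; [exists (Aq v0) | exists 0].
pose mu := inf E.
have mu0 : 0 <= mu by apply: lb_le_inf => //; exists (Aq v0).
have key : forall w, Wf f k w -> mu * Nh w <= Aq w.
  move=> w Ww; case: (pselect (w = 0)) => [->|wn0].
    by rewrite (Qf0 hhL hhH) (Qf0 aL aH) mulr0.
  have Nw := Nh_pos wn0.
  pose w' := cR (Num.sqrt (Nh w))^-1 *: w.
  have Ew' : E (Aq w').
    exists w'; split => //; first exact: W_scale.
    by rewrite /w' (Qf_scaleV hhL hhH) // divff // gt_eqF.
  have := ge_inf (proj2 hinf) Ew'; rewrite /w' (Qf_scaleV aL aH) //.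
  by rewrite ler_pdivlMr.
have hseq : forall n : nat, exists v, [/\ Wf f k v, Nh v = 1 &
    Aq v < mu + (n.+1%:R)^-1].
  move=> n; have := @inf_adherent R E (n.+1%:R)^-1; rewrite invr_gt0 ltr0Sn.
  case/(_ isT hinf) => r [v [Wv Nv ->]] hr; by exists v.
case: (choice hseq) => v hv.
clearbody mu.
case: ell => om [de [om0 de0 hell]].
have hbnd : forall n, QV (v n) <= (mu + 1 + om) / de.
  move=> n; case: (hv n) => _ Nv Av; rewrite ler_pdivlMr // mulrC.
  have := hell (v n); rewrite Nv mulr1 => h.
  have : (n.+1%:R : R)^-1 <= 1 by rewrite invf_le1 ?ler1n ?ltr0Sn.
  move: Av; move: (n.+1%:R^-1 : R) => t. lra.
case: (Lcpt hbnd) => phi [hphi hcau].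
pose vs n := v (phi n).
have Wvs n : Wf f k (vs n) by case: (hv (phi n)).
have Nvs n : Nh (vs n) = 1 by case: (hv (phi n)).
have Avs n : Aq (vs n) < mu + (n.+1%:R)^-1.
  case: (hv (phi n)) => _ _ h; apply: lt_le_trans h _; rewrite lerD2l.
  exact: inv_nat_le (incr_ge hphi n).
have hC : hcauchy ipV vs.
  move=> e e0.
  have T0 : 0 < de * e ^+ 2 / 4%:R by rewrite divr_gt0 ?mulr_gt0 ?exprn_gt0 ?ltr0n.
  set T := de * e ^+ 2 / 4%:R in T0.
  have mo0 : 0 < mu + om + 1 by lra.
  have T10 : 0 < T / (mu + om + 1) by rewrite divr_gt0.
  case: (hcau _ T10) => N1 hN1.
  have T20 : 0 < T / 2%:R by rewrite divr_gt0.
  case: (inv_nat_small T20) => N2 hN2.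
  exists (maxn N1 N2) => n m; rewrite !geq_max => /andP [n1 n2] /andP [m1 m2].
  apply: (Q_lt_hnorm hipV e0).
  have hN := hN1 n m n1 m1; move: hN; rewrite ltr_pdivlMr // => hN.
  have hx := hN2 n n2; have hy := hN2 m m2.
  have hA := Avs n; have hB := Avs m.
  have hpa := Qf_par aL aH (vs n) (vs m).
  have hph := Qf_par hhL hhH (vs n) (vs m).
  have hk := key _ (W_add (Wvs n) (Wvs m)).
  have he := hell (vs n - vs m).
  have hNd := Nh_ge0 (vs n - vs m).
  rewrite !Nvs in hph.
  have : de * QV (vs n - vs m) < de * e ^+ 2; last by rewrite ltr_pM2l.
  have hTe : de * e ^+ 2 = 4%:R * T by rewrite /T [RHS]mulrC divfK // pnatr_eq0.
  rewrite hTe.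
  have hmN : mu * Nh (vs n + vs m) = mu * 4%:R - mu * Nh (vs n - vs m).
    have -> : Nh (vs n + vs m) = 4%:R - Nh (vs n - vs m) by lra.
    by rewrite mulrBr.
  rewrite hmN in hk.
  have hm1 : mu * Nh (vs n - vs m) + om * Nh (vs n - vs m) <=
      Nh (v (phi n) - v (phi m)) * (mu + om + 1) by rewrite -/(vs n) -/(vs m); nra.
  move: hx hy hA hB; move: (n.+1%:R^-1 : R) (m.+1%:R^-1 : R) => xn xm hx hy hA hB.
  clear hmN hTe hN1 T10 hN2; clearbody T. lra.
case: (proj2 hV _ hC) => vi hvi.
have hQ := hconv_Q hipV hvi.
case: ibound => Cb [Cb0 hCb].
case: acont => M hM.
have M0 : 0 < `|M| + 1 by rewrite ltr_pwDr ?normr_ge0.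
have hM' : forall u, Aq u <= (`|M| + 1) * QV u.
  move=> u; apply: le_trans (hM u) _; apply: ler_wpM2r; first exact: QV_ge0.
  have := ler_norm M; lra.
pose d n := vi - vs n.
have Qd n : QV (d n) = QV (vs n - vi).
  by rewrite /d -opprB (Qf_neg (ipL hipV) (ipH' hipV)).
have hdec n : vs n = vi - d n by rewrite /d subKr.
have Wvi : Wf f k vi.
  move=> l hl; apply: small_c => e e0.
  case: (cont2 hipV hhL hhH Nh_ge0 Cb0 hCb (f l) e0) => eta eta0 hce.
  case: (hQ _ eta0) => N hN.
  have := hce (d N); rewrite Qd => /(_ (hN N (leqnn N))) [h1 h2].
  have -> : hh vi (f l) = cconj (hh (f l) (d N)).
    rewrite -hhH /d; have := hhL (-1) (vs N) vi (f l).
    rewrite scaleN1r addrC mulN1r (Wvs N l hl) oppr0 add0r => <-; done.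
  by rewrite cReJ cImJ normrN.
have Nvi : Nh vi = 1.
  apply/eqP; rewrite -subr_eq0; apply/eqP; apply: small_abs => e e0.
  have e30 : 0 < e / 3%:R by rewrite divr_gt0.
  case: (cont2 hipV hhL hhH Nh_ge0 Cb0 hCb vi e30) => eta eta0 hce.
  have eC : 0 < e / 3%:R / Cb by rewrite divr_gt0.
  case: (hQ _ eta0) => N1 hN1; case: (hQ _ eC) => N2 hN2.
  pose n := maxn N1 N2.
  have := hce (d n); rewrite Qd => /(_ (hN1 n (leq_maxl _ _))) [h1 _].
  have h3 : Nh (d n) <= e / 3%:R.
    apply: le_trans (hCb _) _; rewrite Qd; have := hN2 n (leq_maxr _ _).
    rewrite ltr_pdivlMr // mulrC => h; exact: ltW.
  have := Nvs n; rewrite hdec (Qf_sub hhL hhH) => h4.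
  have h5 := ler_norm (Rp (hh vi (d n))); have h6 := ler_normr (Rp (hh vi (d n))).
  have h7 := Nh_ge0 (d n).
  rewrite ler_norml; apply/andP; split; move: h1; rewrite ler_norml => /andP [h1 h1']; lra.
have Avi : Aq vi <= mu.
  rewrite -subr_le0; apply: small_le => e e0.
  have e30 : 0 < e / 3%:R by rewrite divr_gt0.
  case: (cont2 hipV aL aH Aq_ge0 M0 hM' vi e30) => eta eta0 hce.
  case: (hQ _ eta0) => N1 hN1; case: (inv_nat_small e30) => N3 hN3.
  pose n := maxn N1 N3.
  have := hce (d n); rewrite Qd => /(_ (hN1 n (leq_maxl _ _))) [h1 _].
  have h3 := hN3 n (leq_maxr _ _).
  have := Avs n; rewrite hdec (Qf_sub aL aH) => h4.
  have h7 := Aq_ge0 (d n).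
  move: h1; rewrite ler_norml => /andP [h1 h1'].
  move: h3 h4; move: (n.+1%:R^-1 : R) => x h3 h4; lra.
have hk := key _ Wvi; rewrite Nvi mulr1 in hk.
exists vi; split => // w Ww.
have -> : Aq vi = mu by apply/eqP; rewrite eq_le Avi hk.
exact: key.
Qed.

Lemma sum_delta (c : nat -> C) k m : (m < k)%N ->
  \sum_(l < k) c l * (if (l : nat) == m then 1 else 0) = c m.
Proof.
move=> hm; rewrite (bigD1 (Ordinal hm)) //= eqxx mulr1 big1 ?addr0 // => l hl.
rewrite ifF ?mulr0 //; apply/negbTE; apply: contra hl => /eqP h.
by apply/eqP/val_inj.
Qed.

Definition qf (mu : R) x y := a x y - cR mu * hh x y.
Lemma qL mu (c : C) x y z : qf mu (c *: x + y) z = c * qf mu x z + qf mu y z.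
Proof. rewrite /qf aL hhL; ring. Qed.
Lemma qH mu x y : qf mu y x = cconj (qf mu x y).
Proof. by rewrite /qf aH hhH cconjD cconjN cconjM cconjR. Qed.
Lemma QqE mu x : Qf (qf mu) x = Aq x - mu * Nh x.
Proof. by rewrite /Qf /qf cReB ReMcR. Qed.

Lemma EL f k (mu : R) w :
  (forall l m, (l < k)%N -> (m < k)%N -> hh (f l) (f m) = (if l == m then 1 else 0)) ->
  (forall l, (l < k)%N -> forall x, a (f l) x = cR (Aq (f l)) * hh (f l) x) ->
  (forall y, Wf f k y -> mu * Nh y <= Aq y) ->
  Wf f k w -> Aq w = mu * Nh w ->
  forall x, a w x = cR mu * hh w x.
Proof.
move=> hon heig hmin Ww Aw x.
have qpos y : Wf f k y -> 0 <= Qf (qf mu) y by move=> Wy; rewrite QqE subr_ge0 hmin.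
have qw0 : Qf (qf mu) w = 0 by rewrite QqE Aw subrr.
have hRe : forall y, Wf f k y -> Rp (qf mu y w) <= 0.
  move=> y Wy; apply: small_le => e e0.
  have Qy := qpos y Wy.
  pose t := 2%:R * e / (Qf (qf mu) y + 1).
  have t0 : 0 < t by rewrite /t divr_gt0 ?mulr_gt0 // ltr_pwDr.
  have := cross (@qL mu) (@qH mu) t0 (qpos _ (W_lin _ Wy (W_neg Ww))).
  rewrite qw0 mul0r addr0 => h.
  have : t * Qf (qf mu) y <= 2%:R * e.
    rewrite /t mulrAC ler_pdivrMr ?ltr_pwDr //; nra.
  lra.
have hq : forall y, Wf f k y -> qf mu y w = 0.
  move=> y Wy; apply: cplx_ext; rewrite ?cRe0 ?cIm0.
    apply/eqP; rewrite eq_le hRe //=.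
    by have := hRe _ (W_neg Wy); rewrite (sNl (@qL mu) (@qH mu)) cReN oppr_le0.
  have := hRe _ (W_scale 'i%C Wy); have := hRe _ (W_neg (W_scale 'i%C Wy)).
  rewrite (sNl (@qL mu) (@qH mu)) (sZl (@qL mu) (@qH mu)) cReN cReM /= !mul0r !sub0r.
  rewrite !mul1r opprK => h1 h2; apply/eqP; rewrite eq_le; apply/andP; split; lra.
have hq' : forall y, Wf f k y -> qf mu w y = 0.
  by move=> y Wy; rewrite qH hq // cconj0.
have hqf : forall l, (l < k)%N -> qf mu w (f l) = 0.
  move=> l hl; rewrite qH /qf heig // -mulrBl.
  have -> : hh (f l) w = 0 by rewrite hhH Ww // cconj0.
  by rewrite mulr0 cconj0.
pose y := x - \sum_(l < k) hh x (f l) *: f l.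
have Wy : Wf f k y.
  move=> m hm; rewrite /y /hh linearB /= -/(hh x (f m)) (sBl (ipL hipH) (ipH' hipH)).
  rewrite linear_sum /= (eq_bigr (fun l : 'I_k => hh x (f l) *: i (f l))); last first.
    by move=> l _; rewrite linearZ.
  rewrite (s_suml (ipL hipH) (ipH' hipH)).
  rewrite (eq_bigr (fun l : 'I_k => hh x (f l) * (if (l : nat) == m then 1 else 0))).
    by rewrite (sum_delta (fun l => hh x (f l))) // subrr.
  by move=> l _; rewrite -/(hh (f l) (f m)) hon.
have hx : x = y + \sum_(l < k) hh x (f l) *: f l by rewrite /y subrK.
have : qf mu w x = 0.
  rewrite hx (sDr (@qL mu) (@qH mu)) (s_sumr (@qL mu) (@qH mu)) hq' // add0r.
  by rewrite big1 // => l _; rewrite hqf // mulr0.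
by rewrite /qf => /eqP; rewrite subr_eq0 => /eqP.
Qed.

Lemma dim_lemma m (x : 'I_m.+1 -> V) (f : nat -> V) : lin_indep x ->
  exists c : 'I_m.+1 -> C, \sum_(p < m.+1) c p *: x p <> 0 /\
    Wf f m (\sum_(p < m.+1) c p *: x p).
Proof.
move=> hind.
pose M : 'M[C]_(m.+1, m) := \matrix_(p, q) hh (x p) (f q).
have hKer : kermx M != 0.
  rewrite -mxrank_eq0 mxrank_ker subn_eq0 -ltnNge ltnS; exact: rank_leq_col.
have [r [jj hrj]] : exists r jj, kermx M r jj != 0.
  case: (pselect (exists r jj, kermx M r jj != 0)) => // H0.
  exfalso; move/eqP: hKer; apply; apply/matrixP => r jj; rewrite [RHS]mxE.
  case: (eqVneq (kermx M r jj) 0) => // hn; exfalso; apply: H0; by exists r, jj.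
pose d := row r (kermx M).
have dM : d *m M = 0 by rewrite /d -row_mul mulmx_ker row0.
exists (fun p => d 0 p); split.
  move=> hs; have := hind _ hs jj; rewrite /d mxE => h; by rewrite h eqxx in hrj.
move=> q hq.
rewrite (s_suml hhL hhH).
have h := congr1 (fun A : 'rV_m => A 0 (Ordinal hq)) dM; rewrite /= !mxE in h.
rewrite -[RHS]h; apply: eq_bigr => p _; by rewrite ?mxE.
Qed.

Definition step (f : nat -> V) (k : nat) : V :=
  match pselect (exists v, Mz f k v) with
  | left e => sval (cid e) | right _ => 0 end.
Lemma step_spec f k : (exists v, Mz f k v) -> Mz f k (step f k).
Proof. by rewrite /step; case: pselect => // e _; exact: (svalP (cid e)). Qed.

Fixpoint gs (k : nat) : nat -> V :=
  match k with 0 => fun _ => 0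
  | k'.+1 => fun l => if (l < k')%N then gs k' l else step (gs k') k' end.
Definition ee l := gs l.+1 l.
Lemma ee_step k : ee k = step (gs k) k. Proof. by rewrite /ee /= ltnn. Qed.
Lemma gs_ee k l : (l < k)%N -> gs k l = ee l.
Proof.
elim: k => // k IH; rewrite ltnS leq_eqVlt => /orP [/eqP ->|hl] /=.
  by rewrite ltnn ee_step.
by rewrite hl IH.
Qed.
Lemma W_ext f g k v : (forall l, (l < k)%N -> f l = g l) -> Wf f k v -> Wf g k v.
Proof. by move=> hfg hv l hl; rewrite -hfg // hv. Qed.
Lemma Mz_ext f g k v : (forall l, (l < k)%N -> f l = g l) -> Mz f k v -> Mz g k v.
Proof.
move=> hfg [W1 N1 M1]; split => //; first exact: W_ext W1.
move=> w Ww; apply: M1; apply: W_ext Ww => l hl; by rewrite hfg.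
Qed.

Lemma W_mono f l m v : (l <= m)%N -> Wf f m v -> Wf f l v.
Proof. by move=> hlm hv q hq; apply: hv; apply: leq_trans hq hlm. Qed.
Section Greedy.
Hypothesis Vinf : forall m, exists x : 'I_m -> V, lin_indep x.

Lemma ee_Mz k : Mz ee k (ee k).
Proof.
case: (Vinf k.+1) => x hx.
case: (dim_lemma ee hx) => c [c0 Wc].
case: (@minimizer ee k _); first by exists (\sum_(p < k.+1) c p *: x p).
move=> v hv; rewrite ee_step.
apply: (Mz_ext (f := gs k)); first exact: gs_ee.
apply: step_spec; exists v; apply: Mz_ext hv => l hl; by rewrite gs_ee.
Qed.
Lemma ee_N k : Nh (ee k) = 1. Proof. by case: (ee_Mz k). Qed.
Lemma ee_W k : Wf ee k (ee k). Proof. by case: (ee_Mz k). Qed.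
Lemma ee_on l m : hh (ee l) (ee m) = if l == m then 1 else 0.
Proof.
case: (ltngtP l m) => hlm.
- by rewrite hhH ee_W // cconj0.
- by rewrite ee_W.
- by rewrite hlm (s_cR hhL hhH) ee_N.
Qed.
Lemma ee_eig k x : a (ee k) x = cR (Aq (ee k)) * hh (ee k) x.
Proof.
move: x; suff : forall K l, (l < K)%N -> forall x, a (ee l) x = cR (Aq (ee l)) * hh (ee l) x.
  by move=> h; apply: (h k.+1).
elim=> // KK IH l; rewrite ltnS leq_eqVlt => /orP [/eqP ->|hl]; last exact: IH.
case: (ee_Mz KK) => WK NK MK.
apply: (EL (f := ee) (k := KK)) => //.
- by move=> l' m' _ _; exact: ee_on.
- by rewrite NK mulr1.
Qed.
Lemma ee_mono l m : (l <= m)%N -> Aq (ee l) <= Aq (ee m).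
Proof.
move=> hlm; case: (ee_Mz l) => _ _ M; have := M (ee m) (W_mono hlm (ee_W (k:=m))).
by rewrite ee_N mulr1.
Qed.
End Greedy.

Lemma no_bounded_on (e : nat -> V) B :
  (forall l m, hh (e l) (e m) = if l == m then 1 else 0) ->
  (forall k, Aq (e k) <= B) -> False.
Proof.
move=> hon hB.
case: ell => om [de [om0 de0 hell]].
have hQ : forall k, QV (e k) <= (B + om) / de.
  move=> k; rewrite ler_pdivlMr // mulrC; apply: le_trans (hell _) _.
  rewrite /Qf [hh _ _]hon eqxx /= mulr1 lerD2r; exact: hB.
case: (Lcpt hQ) => phi [hphi hc].
case: (hc 1 ltr01) => N hN; have := hN N N.+1 (leqnn _) (leqnSn _).
rewrite (Qf_sub hhL hhH) /Qf !hon !eqxx.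
rewrite ifF; last by apply/negbTE; rewrite neq_ltn hphi.
rewrite /=; lra.
Qed.

Lemma comb m (w : 'I_m -> V) (nu : 'I_m -> R) (mu' : R) (c : 'I_m -> C) :
  (forall p q, a (w p) (w q) = cR (nu p) * hh (w p) (w q)) ->
  (forall p, nu p <= mu') ->
  Aq (\sum_(p < m) c p *: w p) <= mu' * Nh (\sum_(p < m) c p *: w p).
Proof.
move=> heig hnu.
pose sq p := Num.sqrt (mu' - nu p).
have hsq p : sq p ^+ 2 = mu' - nu p by rewrite sqr_sqrtr // subr_ge0.
have hnn p q : hh (w p) (w q) != 0 -> nu p = nu q.
  move=> h0; have e1 := heig p q; have e2 := heig q p.
  rewrite aH e2 cconjM cconjR -hhH in e1.
  have : cR (nu q - nu p) * hh (w p) (w q) = 0 by rewrite cRD cRN mulrBl e1 subrr.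
  move/eqP; rewrite mulf_eq0 (negPf h0) orbF => /eqP /cR_inj /eqP.
  by rewrite subr_eq0 => /eqP.
pose z := \sum_(p < m) c p *: w p.
pose zt := \sum_(p < m) (c p * cR (sq p)) *: w p.
have E : cR mu' * hh z z - a z z = hh zt zt.
  rewrite /z /zt !(s_suml hhL hhH) (s_suml aL aH) mulr_sumr -sumrB.
  apply: eq_bigr => p _.
  rewrite !(s_sumr hhL hhH) (s_sumr aL aH) !mulr_sumr -sumrB.
  apply: eq_bigr => q _.
  rewrite heig.
  case: (eqVneq (hh (w p) (w q)) 0) => [->|h0]; first by rewrite !mulr0 subrr.
  have e := hnn _ _ h0.
  rewrite cconjM cconjR /sq -e.
  set s := cR (Num.sqrt (mu' - nu p)).
  have hs : s * s = cR mu' - cR (nu p) by rewrite /s -cRM -expr2 hsq cRD cRN.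
  transitivity (c p * cconj (c q) * hh (w p) (w q) * (s * s)); last by ring.
  rewrite hs; ring.
have := Nh_ge0 zt; rewrite /Qf -E cReB ReMcR -/z; lra.
Qed.

Definition subsp (P : V -> Prop) :=
  P 0 /\ forall (c : C) x y, P x -> P y -> P (c *: x + y).
Lemma subsp_sum P m (c : 'I_m -> C) (x : 'I_m -> V) : subsp P ->
  (forall p, P (x p)) -> P (\sum_(p < m) c p *: x p).
Proof.
move=> [P0 Pl] hx; elim/big_rec: _ => // p y _ Py; exact: Pl.
Qed.

Lemma indep_nz (W : lmodType C) m (x : 'I_m -> W) k : lin_indep x -> x k <> 0.
Proof.
move=> hx xk0; have := hx (fun p => if p == k then 1 else 0).
rewrite (bigD1 k) //= eqxx scale1r xk0 add0r big1 => [/(_ erefl k)|p /negPf ->].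
  by rewrite eqxx => /eqP; rewrite oner_eq0.
by rewrite scale0r.
Qed.

Lemma indep_pre (W : lmodType C) (g : {linear V -> W}) m (x : 'I_m -> W) (u : 'I_m -> V) :
  (forall k, x k = g (u k)) -> lin_indep x -> lin_indep u.
Proof.
move=> hxu hx c hc; apply: hx.
rewrite (eq_bigr (fun p => g (c p *: u p))); last by move=> p _; rewrite linearZ hxu.
by rewrite -linear_sum hc linear0.
Qed.

Lemma indep_img m (u : 'I_m -> V) : lin_indep u -> lin_indep (fun k => i (u k)).
Proof.
move=> hu c hc; apply: hu; apply: i_inj; rewrite linear0 -[RHS]hc linear_sum.
by apply: eq_bigr => p _; rewrite linearZ.
Qed.

Lemma hspan_pre lam (P : V -> Prop) phi : subsp P ->
  (forall psi, Nzero ipH ipK i j a lam psi -> exists z, P z /\ psi = j z) ->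
  hspan (Nzero ipH ipK i j a lam) phi -> exists z, P z /\ phi = j z.
Proof.
move=> hP hpre [m [c [y [hy ->]]]].
have : forall k, exists z, P z /\ y k = j z by move=> k; exact: hpre.
case/fin_all_exists => z hz.
exists (\sum_(p < m) c p *: z p); split; first by apply: subsp_sum => // p; case: (hz p).
rewrite linear_sum; apply: eq_bigr => p _; rewrite linearZ; by case: (hz p) => _ ->.
Qed.

Lemma span_indep lam (P : V -> Prop) : subsp P ->
  (forall psi, Nzero ipH ipK i j a lam psi -> exists z, P z /\ psi = j z) ->
  infinite_dim (hspan (Nzero ipH ipK i j a lam)) ->
  forall m, exists x : 'I_m -> V, lin_indep x /\ forall k, P (x k).
Proof.
move=> hP hpre hinf m; case: (hinf m) => y [hy hys].
have : forall k, exists z, P z /\ y k = j z by move=> k; exact: (hspan_pre hP hpre (hys k)).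
case/fin_all_exists => z hz; exists z; split; last by move=> k; case: (hz k).
by apply: (indep_pre (g := j) _ hy) => k; case: (hz k).
Qed.

Lemma AN_of u (nu : R) : (forall x, a u x = cR nu * hh u x) ->
  assoc_op ipH i (fun _ : V => True) a (i u) (cR nu *: i u).
Proof.
move=> hu; exists u; split => //.
  exists (fun _ => i (cR nu *: u)); split; first by move=> _; exists (cR nu *: u).
  move=> e e0; exists 0%N => n _; rewrite linearZ subrr /hnorm.
  by rewrite (s0l (ipL hipH) (ipH' hipH)) sqrtr0.
by move=> v _; rewrite hu (sZl (ipL hipH) (ipH' hipH)).
Qed.

Lemma Nzero_prop lam phi : Nzero ipH ipK i j a lam phi ->
  exists u, [/\ phi = j u, forall v, j v = 0 -> qf lam u v = 0 & qf lam u u = 0].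
Proof.
case=> _ [psi [[[u [-> hb]] _] hz]]; exists u; split => //.
  by move=> v jv; have := hb v; rewrite jv (s0r (ipL hipK) (ipH' hipK)).
by have := hb u; rewrite hz.
Qed.

Lemma sum_delta_ord m (c : 'I_m -> C) (q : 'I_m) :
  \sum_(p < m) c p * (if (p : nat) == (q : nat) then 1 else 0) = c q.
Proof.
rewrite (bigD1 q) //= eqxx mulr1 big1 ?addr0 // => p hp.
by rewrite ifF ?mulr0 //; apply/negbTE; apply: contra hp => /eqP h; apply/eqP/val_inj.
Qed.

Lemma Aq_eig u (nu : R) : a u u = cR nu * hh u u -> Aq u = nu * Nh u.
Proof. by rewrite /Qf => ->; rewrite ReMcR. Qed.

Lemma main_thm :
  let VD := fun u : V => j u = 0 in
  let AN := assoc_op ipH i (fun _ : V => True) a in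
  let AD := assoc_op ipH i VD a in
  (forall (u : V) (mu : R[i]), VD u -> i u <> 0 -> ~ AN (i u) (mu *: i u)) ->
  (forall lam : R, 0 < lam -> infinite_dim (hspan (Nzero ipH ipK i j a lam))) ->
  forall (n : nat) (muD : R), (1 <= n)%N -> nth_eig AD n muD ->
    exists muN : R, nth_eig AN n.+1 muN /\ muN < muD.
Proof.
move=> VD AN AD hI hII n lam n1 [[x [xind xeig]] lam_min].
have Vinf : forall m, exists x : 'I_m -> V, lin_indep x.
  move=> m; have hP : subsp (fun _ => True) by split.
  have hpre : forall psi, Nzero ipH ipK i j a 1 psi -> exists z, True /\ psi = j z.
    by move=> psi /Nzero_prop [u [-> _ _]]; exists u.
  by case: (span_indep hP hpre (hII 1 ltr01) m) => y [hy _]; exists y.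
have : forall k, exists nu_u : R * V, [/\ nu_u.1 <= lam, VD nu_u.2, x k = i nu_u.2 &
      forall v, VD v -> a nu_u.2 v = cR nu_u.1 * hh nu_u.2 v].
  move=> k; case: (xeig k) => nu [hnu [u [hu hxu _ hav]]].
  exists (nu, u); split => //= v hv; by rewrite hav // hxu (sZl (ipL hipH) (ipH' hipH)).
case/fin_all_exists => nuu hnuu.
pose nu k := (nuu k).1; pose u k := (nuu k).2.
have hnu k : nu k <= lam by case: (hnuu k).
have huD k : VD (u k) by case: (hnuu k).
have hxu k : x k = i (u k) by case: (hnuu k).
have hu_eig p q : a (u p) (u q) = cR (nu p) * hh (u p) (u q).
  by case: (hnuu p) => _ _ _ ->.
have u_ind : lin_indep u := indep_pre (g := i) hxu xind.
have VDsum : forall (c : 'I_n -> C), VD (\sum_(p < n) c p *: u p).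
  move=> c; rewrite /VD linear_sum big1 // => p _; by rewrite linearZZ (huD p : j (u p) = 0) scaler0.
exists (Aq (ee n)); split.
  split.
    exists (fun p : 'I_n.+1 => i (ee p)); split.
      move=> c hc q; have := congr1 (fun h => ipH h (i (ee q))) hc.
      rewrite /= (s0l (ipL hipH) (ipH' hipH)) (s_suml (ipL hipH) (ipH' hipH)).
      rewrite (eq_bigr (fun p : 'I_n.+1 => c p * (if (p : nat) == (q : nat) then 1 else 0))).
        by rewrite sum_delta_ord.
      by move=> p _; rewrite -/(hh (ee p) (ee q)) (ee_on Vinf).
    move=> p; exists (Aq (ee p)); split; last by apply: AN_of; exact: ee_eig.
    by apply: (ee_mono Vinf); rewrite -ltnS; exact: ltn_ord.
  move=> mu' hmu' [y [yind yeig]].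
  have : forall p, exists nw : R * V, [/\ nw.1 <= mu', y p = i nw.2 &
      forall v, a nw.2 v = cR nw.1 * hh nw.2 v].
    move=> p; case: (yeig p) => nu0 [hnu0 [w [_ hyw _ haw]]].
    by exists (nu0, w); split => // v; rewrite haw // hyw (sZl (ipL hipH) (ipH' hipH)).
  case/fin_all_exists => nw hnw.
  pose w p := (nw p).2; pose nu' p := (nw p).1.
  have w_ind : lin_indep w.
    by apply: (indep_pre (g := i) _ yind) => p; case: (hnw p).
  case: (dim_lemma ee w_ind) => c [z0 Wz].
  have hw_eig p q : a (w p) (w q) = cR (nu' p) * hh (w p) (w q) by case: (hnw p) => _ _ ->.
  have hnu' p : nu' p <= mu' by case: (hnw p).
  have hc := @comb _ w nu' mu' c hw_eig hnu'.
  case: (ee_Mz Vinf n) => _ _ hM; have := hM _ Wz.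
  have Nz := Nh_pos z0.
  move=> h1; have : Aq (ee n) * Nh (\sum_(p < n.+1) c p *: w p) <= mu' * Nh (\sum_(p < n.+1) c p *: w p).
    exact: le_trans h1 hc.
  rewrite ler_pM2r // => h2; have := lt_le_trans hmu' h2; by rewrite ltxx.
rewrite ltNge; apply/negP => hle.
have k0 : 'I_n := Ordinal n1.
have u0nz : u k0 <> 0 := indep_nz (k:=k0) u_ind.
have Aqu0 := Aq_eig (hu_eig k0 k0).
have Nu0 := Nh_pos u0nz.
have nu0 : 0 <= nu k0.
  have := Aq_ge0 (u k0); rewrite Aqu0 => h; rewrite -(pmulr_lge0 _ Nu0) //.
have lam0 : 0 < lam.
  rewrite lt_neqAle (le_trans nu0 (hnu k0)) andbT; apply/negP => /eqP l0.
  have nz : nu k0 = 0 by apply/eqP; rewrite eq_le nu0 andbT l0 hnu.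
  have hEL : forall x, a (u k0) x = cR 0 * hh (u k0) x.
    apply: (@EL (fun _ => 0) 0 0 (u k0)).
    - by move=> l m.
    - by [].
    - by move=> y _; rewrite mul0r Aq_ge0.
    - by move=> l.
    - by rewrite Aqu0 nz !mul0r.
  apply: (hI (u k0) (cR 0) (huD k0)); first by rewrite -hxu; exact: indep_nz xind.
  exact: AN_of.
pose Z z := Wf ee n z /\ forall v, a z v = cR lam * hh z v.
have hZ : subsp Z.
  split.
    split; first by move=> l _; rewrite /hh linear0 (s0l (ipL hipH) (ipH' hipH)).
    by move=> v; rewrite (s0l aL aH) /hh linear0 (s0l (ipL hipH) (ipH' hipH)) mulr0.
  move=> c z z' [Wz ez] [Wz' ez']; split; first exact: W_lin.
  by move=> v; rewrite aL hhL ez ez'; ring.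
have hpreZ : forall psi, Nzero ipH ipK i j a lam psi -> exists z, Z z /\ psi = j z.
  move=> psi /Nzero_prop [u0 [-> hb hbb]].
  case: (eqVneq (j u0) 0) => hj.
    by exists 0; split; [case: hZ | rewrite hj linear0].
  pose X (p : 'I_n.+1) := if unlift ord_max p is Some q then u q else u0.
  have hXw q : X (widen_ord (leqnSn n) q) = u q.
    have -> : widen_ord (leqnSn n) q = lift ord_max q by apply: val_inj; rewrite /= /bump leqNgt ltn_ord.
    by rewrite /X liftK.
  have hXm : X ord_max = u0 by rewrite /X unlift_none.
  have hsum : forall c : 'I_n.+1 -> C, \sum_(p < n.+1) c p *: X p =
      \sum_(q < n) c (widen_ord (leqnSn n) q) *: u q + c ord_max *: u0.
    by move=> c; rewrite big_ord_recr /= hXm; congr (_ + _); apply: eq_bigr => q _; rewrite hXw.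
  have X_ind : lin_indep X.
    move=> c; rewrite hsum => hc.
    have hcm : c ord_max = 0.
      have := congr1 j hc; rewrite linear0 linearD linearZZ.
      rewrite (VDsum (fun q => c (widen_ord (leqnSn n) q)) : j _ = 0) add0r.
      by move/eqP; rewrite scaler_eq0 (negPf hj) orbF => /eqP.
    move: hc; rewrite hcm scale0r addr0 => /u_ind hc' p.
    case: (unliftP ord_max p) => [q ->|->] //.
    have -> : lift ord_max q = widen_ord (leqnSn n) q by apply: val_inj; rewrite /= /bump leqNgt ltn_ord.
    exact: hc'.
  case: (dim_lemma ee X_ind) => cc [w0 Ww]; rewrite hsum in w0 Ww.
  set e' := \sum_(q < n) _ in w0 Ww; set cm := cc ord_max in w0 Ww.
  set w := e' + cm *: u0 in w0 Ww.
  have VDe : j e' = 0 := VDsum _.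
  have q1 : qf lam u0 e' = 0 := hb e' VDe.
  have q2 : qf lam e' u0 = 0 by rewrite qH q1 cconj0.
  have hqw : Rp (qf lam w w) = Rp (qf lam e' e').
    rewrite /w (sDl (@qL lam) (@qH lam)) !(sDr (@qL lam) (@qH lam)).
    rewrite !(sZl (@qL lam) (@qH lam)) !(sZr (@qL lam) (@qH lam)) q1 q2 hbb.
    by rewrite !mulr0 !addr0.
  have hce : Aq e' <= lam * Nh e' by apply: comb.
  have hwle : Aq w <= lam * Nh w.
    have := hqw; rewrite -/(Qf (qf lam) w) -/(Qf (qf lam) e') !QqE => h; lra.
  have Nw := Nh_pos w0.
  case: (ee_Mz Vinf n) => _ _ hM.
  have hM' := hM _ Ww.
  have Aw : Aq w = lam * Nh w.
    apply/eqP; rewrite eq_le hwle /=; apply: le_trans hM'.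
    by rewrite ler_pM2r.
  have hEL : forall v, a w v = cR lam * hh w v.
    apply: (EL (f := ee) (k := n)) => //.
    - by move=> l m _ _; exact: ee_on.
    - by move=> l _; exact: ee_eig.
    - move=> y Wy; apply: le_trans (hM _ Wy); apply: ler_wpM2r => //; exact: Nh_ge0.
  have cm0 : cm != 0.
    apply/eqP => cm0; apply: (hI w (cR lam)).
    - by rewrite /VD /w cm0 scale0r addr0.
    - by move=> iw; apply: w0; apply: i_inj; rewrite iw linear0.
    - exact: AN_of.
  exists (cm^-1 *: w); split.
    rewrite -[_ *: w]addr0; apply: (proj2 hZ); first by split.
    exact: (proj1 hZ).
  rewrite linearZZ /w linearD VDe add0r linearZZ scalerA mulVf // scale1r //.
have hZind := span_indep hZ hpreZ (hII lam lam0).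
have hbd : forall k, Aq (ee k) <= lam.
  move=> k; case: (hZind k.+1) => zz [zind zZ].
  case: (dim_lemma ee zind) => c [y0 Wy].
  have Zy := subsp_sum c hZ zZ.
  have Ay := Aq_eig (proj2 Zy _).
  case: (ee_Mz Vinf k) => _ _ hM; have := hM _ Wy.
  by rewrite Ay ler_pM2r // Nh_pos.
exact: (no_bounded_on (ee_on Vinf) hbd).
Qed.

End Main.


Unset Implicit Arguments.
Unset Default Proof Using.

Theorem theorem2p2 (R : realType)
  (V H K : lmodType R[i])
  (ipV : V -> V -> R[i]) (ipH : H -> H -> R[i]) (ipK : K -> K -> R[i])
  (hV : is_hilbert ipV) (hH : is_hilbert ipH) (hK : is_hilbert ipK)
  (i : {linear V -> H}) (i_inj : injective i) (i_cpt : compact_map ipV ipH i)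
  (j : {linear V -> K}) (j_cpt : compact_map ipV ipK j)
  (a : V -> V -> R[i])
  (a_sesq : sesquilinear a) (a_pos : form_positive a)
  (a_sym : form_symmetric a) (a_cont : form_continuous ipV a)
  (a_ell : form_elliptic ipV ipH i a) :
  let VD := fun u : V => j u = 0 in
  let AN := assoc_op ipH i (fun _ : V => True) a in
  let AD := assoc_op ipH i VD a in
  (* (I) A^N has no eigenvector belonging to V_D *)
  (forall (u : V) (mu : R[i]), VD u -> i u <> 0 -> ~ AN (i u) (mu *: i u)) ->
  (* (II) *)
  (forall lam : R, 0 < lam ->
     infinite_dim (hspan (Nzero ipH ipK i j a lam))) ->
  forall (n : nat) (muD : R), (1 <= n)%N -> nth_eig AD n muD ->
    exists muN : R, nth_eig AN n.+1 muN /\ muN < muD.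
Proof.
exact: (@main_thm R V H K ipV ipH ipK hV hH hK i i_inj i_cpt j j_cpt a a_sesq a_pos a_sym a_cont a_ell).
Qed.
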